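(* Let $F=\{1,2,3,5,8,\dots\}$ be the set of positive Fibonacci numbers. There exists a $4$-coloring of $\mathbb{N}$ admitting no monochromatic $4$-term $F$-diffsequence. In particular $F$ is not $4$-accessible, i.e. $\operatorname{doa}(F)\le 3$.
   Context: For $D\subseteq\mathbb{N}$, a $k$-term $D$-diffsequence is a sequence of integers $x_1,\dots,x_k$ with $x_{i+1}-x_i\in D$ for all $1\le i\le k-1$. $D$ is $r$-accessible if every $r$-coloring $\chi:\mathbb{N}\to\{1,\dots,r\}$ admits monochromatic $k$-term $D$-diffsequences for every $k\ge1$; $\operatorname{doa}(D)$ is the greatest $r$ for which $D$ is $r$-accessible. *)

(* Defs.v *)
From mathcomp Require Import all_boot.
Set Implicit Arguments. Unset Strict Implicit. Unset Printing Implicit Defensive.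

Fixpoint fib (n : nat) : nat :=
  match n with
  | 0 => 0
  | 1 => 1
  | (m.+1 as p).+1 => fib p + fib m
  end.

Definition Fib (d : nat) : Prop := 0 < d /\ exists n, d = fib n.

(* N = positive integers {1,2,...}. A k-term D-diffsequence in N is given
   by x 0, ..., x (k-1) (indices 0-based), all in N, with consecutive
   differences in D. *)
Definition diffseq (D : nat -> Prop) (x : nat -> nat) (k : nat) : Prop :=
  (forall i, i < k -> 0 < x i) /\
  (forall i, i.+1 < k -> exists2 d, D d & x i.+1 = x i + d).

Definition monochromatic (r : nat) (chi : nat -> 'I_r) (x : nat -> nat) (k : nat)
  : Prop := forall i, i < k -> chi (x i) = chi (x 0).

(* D is r-accessible: every r-colouring of N admits monochromatic k-term
   D-diffsequences for every k >= 1. (Colourings are functions nat -> 'I_r;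
   only their values on positive integers matter.) *)
Definition accessible (D : nat -> Prop) (r : nat) : Prop :=
  forall chi : nat -> 'I_r, forall k, 1 <= k ->
    exists x, diffseq D x k /\ monochromatic chi x k.

(* Main.v *)
From Stdlib Require Import Reals Lra Lia ZArith.
Require Import Defs.
From mathcomp Require Import all_boot zify.

Lemma fibSS n : fib n.+2 = fib n.+1 + fib n.
Proof. by []. Qed.

Lemma fib3 n : fib (n + 3) = 2 * fib (n + 1) + fib n.
Proof. rewrite !addnS !addn0 !fibSS; lia. Qed.

Lemma fib_par k : ~~ odd (fib (3 * k)) && odd (fib (3 * k + 1)) && odd (fib (3 * k + 2)).
Proof.
elim: k => [//|k /andP [/andP [H0 H1] H2]].
have E0 : 3 * k.+1 = 3 * k + 3 by lia.
have E1 : 3 * k.+1 + 1 = (3 * k + 1) + 3 by lia.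
have E2 : 3 * k.+1 + 2 = (3 * k + 2) + 3 by lia.
rewrite E1 E2 E0 !fib3.
have A1 : 3 * k + 1 + 1 = 3 * k + 2 by lia.
have A2 : 3 * k + 2 + 1 = (3 * k + 1).+2 by lia.
have A4 : (3 * k + 1).+1 = 3*k+2 by lia.
rewrite A1 A2 fibSS A4 !oddD ?oddM /= H1 H2.
by move/negbTE: H0 => ->.
Qed.

Lemma fib_even_3 n : ~~ odd (fib n) -> exists m, n = 3 * m.
Proof.
move=> H. have := fib_par (n %/ 3).
have := divn_eq n 3. have : n %% 3 < 3 by rewrite ltn_mod.
case E3: (n %% 3) => [|[|[|r]]] // _ E.
- by move=> _; exists (n %/ 3); lia.
- have En : n = 3 * (n %/ 3) + 1 by lia.
  by rewrite En in H; move: H => /negbTE ->; case/andP => /andP [].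
- have En : n = 3 * (n %/ 3) + 2 by lia.
  by rewrite En in H; move: H => /negbTE ->; case/andP.
Qed.

Lemma fib_mod4 m : exists q, fib (3 * m + 2) = 4 * q + 1.
Proof.
have fib6 : forall n, fib (n + 6) = fib n + 4 * (2 * fib (n+1) + fib n).
  move=> n. rewrite !addnS !addn0 !fibSS; lia.
elim: m {-2}m (leqnn m) => [|M IH] m Hm.
  have -> : m = 0 by lia.
  by exists 0.
case: m Hm => [|[|m]] Hm; first by exists 0.
  by exists 1.
have [q Hq] := IH m (ltnW Hm).
exists (q + 2 * fib (3*m+2+1) + fib (3*m+2)).
have -> : 3 * m.+2 + 2 = (3 * m + 2) + 6 by lia.
rewrite fib6; lia.
Qed.

Section RealPart.
Local Open Scope R_scope.
Definition s5 : R := sqrt 5.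
Definition psi : R := ((1 - s5) / 2)%R.
Definition kap : R := (- psi / 4)%R.
Definition alp : R := (- psi / 2)%R.
Definition theta (x : nat) : R := frac_part (INR x * kap).

Lemma s5sq : s5 * s5 = 5.
Proof. by unfold s5; rewrite sqrt_sqrt; lra. Qed.

Lemma s5b : 2.236 < s5 < 2.2361.
Proof. have := s5sq. have : 0 <= s5 by apply sqrt_pos. split; nra. Qed.

Lemma psi2 : psi * psi = psi + 1.
Proof. have := s5sq. unfold psi. nra. Qed.

Lemma psi3 : psi ^ 3 = 2 - s5.
Proof. simpl. have H := psi2.
have -> : psi*(psi*(psi*1)) = (psi*psi)*psi by ring.
rewrite H Rmult_plus_distr_r H. unfold psi. lra. Qed.

Lemma INR_addn (a b : nat) : INR (a + b)%N = INR a + INR b.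
Proof. exact: plus_INR. Qed.

Lemma fibR n : INR (fib n.+1) * (- psi) + psi ^ n.+1 = INR (fib n).
Proof.
suff : INR (fib n.+1) * (- psi) + psi ^ n.+1 = INR (fib n) /\
       INR (fib n.+2) * (- psi) + psi ^ n.+2 = INR (fib n.+1) by case.
elim: n => [|n [IH1 IH2]].
  simpl. have := psi2. lra.
split => //.
have -> : fib n.+3 = (fib n.+2 + fib n.+1)%N by [].
have F2 : fib n.+2 = (fib n.+1 + fib n)%N by [].
rewrite F2 in IH2 *.
rewrite !INR_addn.
have E : psi ^ n.+3 = psi ^ n.+2 + psi ^ n.+1.
  rewrite /= -Rmult_assoc psi2 /=; ring.
rewrite E.
rewrite INR_addn in IH2. lra.
Qed.

Lemma cpow (c : R) m : -1 < c < 0 -> c <= c ^ m.+1 <= c ^ 2.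
Proof.
move=> Hc. elim: m => [|m [IH1 IH2]]. simpl; nra.
have -> : c ^ m.+2 = c * c ^ m.+1 by [].
split; simpl in *; nra.
Qed.

Lemma stepR m q : fib (3 * m + 2) = (4 * q + 1)%N ->
  INR (fib (3 * m + 3)) * kap = INR q + (1 - psi ^ (3 * m + 3)) / 4.
Proof.
move=> H. have := fibR (3 * m + 2).
have -> : (3 * m + 2).+1 = (3 * m + 3)%N by lia.
rewrite H INR_addn mult_INR /= /kap. lra.
Qed.

Lemma sbounds m : s5 - 2 <= (1 - psi ^ (3 * m + 3)) / 4 <= alp.
Proof.
have -> : (3 * m + 3)%N = (3 * m.+1)%N by lia.
rewrite pow_mult psi3.
have := s5b. move=> Hb.
have := cpow (2 - s5) m ltac:(lra).
have -> : (2 - s5) ^ 2 = 9 - 4 * s5 by have := s5sq; simpl; nra.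
rewrite /alp /psi. lra.
Qed.

Lemma frac_step x d q s : INR d * kap = INR q + s -> 0 < s < 1 ->
  theta (x + d) = theta x + s \/ theta (x + d) = theta x + s - 1.
Proof.
move=> Hd Hs. rewrite /theta /frac_part.
have [A1 A2] := base_fp (INR x * kap).
have [B1 B2] := base_fp (INR (x + d) * kap).
rewrite /frac_part in A1 A2 B1 B2.
set z := Int_part (INR x * kap) in A1 A2 *.
set z' := Int_part (INR (x + d) * kap) in B1 B2 *.
have E : INR (x + d) * kap = INR x * kap + INR q + s.
  rewrite INR_addn Rmult_plus_distr_r Hd. ring.
rewrite E in B1 B2 *.
have K : IZR (Z.of_nat q + z - z') = INR q + IZR z - IZR z'.
  by rewrite minus_IZR plus_IZR -INR_IZR_INZ.
have L1 : (-2 < IZR (Z.of_nat q + z - z')) by lra.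
have L2 : (IZR (Z.of_nat q + z - z') < 1) by lra.
apply lt_IZR in L1. apply lt_IZR in L2.
have [H0|H1] : (Z.of_nat q + z - z' = 0)%Z \/ (Z.of_nat q + z - z' = -1)%Z by lia.
- left. rewrite H0 in K. simpl in K. lra.
- right. rewrite H1 in K. simpl in K. lra.
Qed.

End RealPart.

Section Main.
Local Open Scope R_scope.
Definition bcol (x : nat) : bool := if Rlt_dec (theta x) alp then true else false.
Definition chi4 (x : nat) : 'I_4 := inord (2 * bcol x + odd x).

Lemma chi_parts a b : chi4 a = chi4 b -> bcol a = bcol b /\ odd a = odd b.
Proof.
move/(congr1 val) => /=. rewrite !inordK; try by case: (bcol _); case: (odd _).
by case: (bcol a); case: (bcol b); case: (odd a); case: (odd b).
Qed.

Lemma alpE : alp = ((s5 - 1) / 4).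
Proof. rewrite /alp /psi. lra. Qed.

Lemma walk_step a d : Fib d -> odd (a + d) = odd a ->
  exists s : R, (s5 - 2 <= s <= alp) /\
    (theta (a + d) = theta a + s \/ theta (a + d) = theta a + s - 1).
Proof.
case=> Hd [n En] Ho.
have Hev : ~~ odd d by move: Ho; rewrite oddD; case: (odd a); case: (odd d).
rewrite En in Hev. have [m0 Hm0] := fib_even_3 n Hev.
case: m0 Hm0 => [|m] Hm0; first by rewrite En Hm0 in Hd.
have Hn : n = (3 * m + 3)%N by lia.
have [q Hq] := fib_mod4 m.
exists ((1 - psi ^ (3 * m + 3)) / 4). split; first exact: sbounds.
rewrite En Hn. apply: (frac_step a _ _ _ (stepR m q Hq)).
have := sbounds m. have := s5b. rewrite alpE. lra.
Qed.

Lemma bcolT x : bcol x = true -> (theta x < alp).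
Proof. by rewrite /bcol; case: Rlt_dec. Qed.
Lemma bcolF x : bcol x = false -> (alp <= theta x).
Proof. rewrite /bcol; case: Rlt_dec => // H _; lra. Qed.

Lemma no4 (t0 t1 t2 t3 s0 s1 s2 : R) :
  (0 <= t0 < 1) -> (0 <= t1 < 1) -> (0 <= t2 < 1) -> (0 <= t3 < 1) ->
  (s5 - 2 <= s0 <= alp) -> (s5 - 2 <= s1 <= alp) -> (s5 - 2 <= s2 <= alp) ->
  (t1 = t0 + s0 \/ t1 = t0 + s0 - 1) ->
  (t2 = t1 + s1 \/ t2 = t1 + s1 - 1) ->
  (t3 = t2 + s2 \/ t3 = t2 + s2 - 1) ->
  ((t0 < alp /\ t1 < alp /\ t2 < alp /\ t3 < alp) \/
   (alp <= t0 /\ alp <= t1 /\ alp <= t2 /\ alp <= t3)) -> False.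
Proof.
rewrite alpE => ? ? ? ? ? ? ? H1 H2 H3 H. have := s5b => ?.
by case: H1 => ?; case: H2 => ?; case: H3 => ?; case: H => ?; lra.
Qed.

Lemma chi_good x : ~ (diffseq Fib x 4 /\ monochromatic chi4 x 4).
Proof.
case=> [[_ Hst] Hm].
have M i : (i < 4)%N -> bcol (x i) = bcol (x 0%N) /\ odd (x i) = odd (x 0%N).
  by move=> H; apply: chi_parts; apply: Hm.
have S i : (i.+1 < 4)%N -> exists s : R, (s5 - 2 <= s <= alp) /\
    (theta (x i.+1) = theta (x i) + s \/ theta (x i.+1) = theta (x i) + s - 1).
  move=> Hi. have [d Fd E] := Hst i Hi. rewrite E. apply: walk_step => //.
  rewrite -E (M i.+1 Hi).2 (M i (ltnW Hi)).2. done.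
have [s0 [B0 T0]] := S 0%N erefl.
have [s1 [B1 T1]] := S 1%N erefl.
have [s2 [B2 T2]] := S 2%N erefl.
have F t := base_fp (INR t * kap).
have Fr t : (0 <= theta t < 1) by have [? ?] := F t; rewrite /theta; lra.
apply: (@no4 _ _ _ _ _ _ _ (Fr _) (Fr _) (Fr _) (Fr _) B0 B1 B2 T0 T1 T2).
have [b1 _] := M 1%N erefl. have [b2 _] := M 2%N erefl. have [b3 _] := M 3%N erefl.
case E0: (bcol (x 0%N)) b1 b2 b3 => b1 b2 b3.
- by left; do !split; apply: bcolT; assumption.
- by right; do !split; apply: bcolF; assumption.
Qed.

End Main.

Theorem mainTheorem9 :
  (exists chi : nat -> 'I_4,
     forall x : nat -> nat, ~ (diffseq Fib x 4 /\ monochromatic chi x 4))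
  /\ ~ accessible Fib 4
  /\ (forall r, accessible Fib r -> r <= 3).
Proof.
split; first by exists chi4; exact: chi_good.
split.
  move=> Hacc. have [x Hx] := Hacc chi4 4 erefl. exact: chi_good Hx.
move=> r Hacc. case: (leqP r 3) => // Hr.
have H4 : (4 <= r)%N by [].
have [x [Hd Hm]] := Hacc (fun n => widen_ord H4 (chi4 n)) 4 erefl.
exfalso; apply: (chi_good x). split => // i Hi.
apply: val_inj. have := Hm i Hi. by move/(congr1 val).
Qed.
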